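(* Let $k$ be a field and $B$ a standard graded $k$-algebra of dimension $d$ with homogeneous maximal ideal $\mathfrak{m}$. Let $s\ge0$ be an integer and let $A$ be the $k$-subalgebra of $B$ generated by $d+s$ linear forms $x_1,\ldots,x_{d+s}$ of $B$. Then \[\mathfrak{m}^n=(x_1,\ldots,x_{d-1})\mathfrak{m}^{n-1}+(x_d,\ldots,x_{d+s})^n\quad\text{for all } n\gg0\] if and only if $B/A$ is a finite module over $k[x_1,\ldots,x_{d-1}]$.
   Context: A standard graded $k$-algebra is a graded $k$-algebra $B=\bigoplus_{i\ge0}B_i$ with $B_0=k$, generated as a $k$-algebra by finitely many elements of $B_1$ (linear forms). The ideals in the displayed equation are ideals of $B$. *)

(* Defs.v *)
From HB Require Import structures.
From mathcomp Require Import all_boot all_order all_algebra.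
From mathcomp Require Import mpoly.
Set Implicit Arguments. Unset Strict Implicit. Unset Printing Implicit Defensive.
Import GRing.Theory.
Local Open Scope ring_scope.

Section Defs.
Variables (k : fieldType) (B : comAlgType k).

(* Standard graded k-algebra structure on B, with graded pieces G i = B_i:
   each B_i is a k-subspace, B_i B_j ⊆ B_(i+j), B = ⊕_i B_i (existence and
   uniqueness of decompositions), B_0 = k, and B is generated as a
   k-algebra by finitely many elements of B_1. *)

Definition alg_gen (S : seq B) : B -> Prop :=
  fun y => exists p : {mpoly k[size S]},
    y = mmap (fun c : k => c%:A) (fun i : 'I_(size S) => S`_i) p.

Definition standard_graded (G : nat -> B -> Prop) : Prop :=
  (forall i, G i 0 /\ (forall a u v, G i u -> G i v -> G i (a *: u + v))) /\
      (forall i j u v, G i u -> G j v -> G (i + j)%N (u * v)) /\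
      (forall y, exists n (c : 'I_n -> B),
          (forall i : 'I_n, G i (c i)) /\ y = \sum_(i < n) c i) /\
      (forall n (c : 'I_n -> B), (forall i : 'I_n, G i (c i)) ->
          \sum_(i < n) c i = 0 -> forall i, c i = 0) /\
      (forall y, G 0%N y <-> exists a : k, y = a%:A) /\
      (exists S : seq B, (forall z, z \in S -> G 1%N z) /\
          forall y, alg_gen S y).

Definition hmax (G : nat -> B -> Prop) : B -> Prop :=
  fun y => exists n (c : 'I_n -> B),
    (forall i : 'I_n, G (i.+1) (c i)) /\ y = \sum_(i < n) c i.

Definition ideal_gen (S : seq B) : B -> Prop :=
  fun y => exists c : 'I_(size S) -> B, y = \sum_(i < size S) c i * S`_i.

Definition ideal_add (I J : B -> Prop) : B -> Prop :=
  fun y => exists a b, I a /\ J b /\ y = a + b.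

Definition ideal_mul (I J : B -> Prop) : B -> Prop :=
  fun y => exists n (a b : 'I_n -> B),
    (forall i, I (a i)) /\ (forall i, J (b i)) /\ y = \sum_(i < n) a i * b i.

Fixpoint ideal_pow (I : B -> Prop) (n : nat) : B -> Prop :=
  match n with
  | 0%N => fun _ => True
  | n'.+1 => ideal_mul I (ideal_pow I n')
  end.

Definition is_ideal (I : B -> Prop) : Prop :=
  I 0 /\ (forall u v, I u -> I v -> I (u + v)) /\ (forall r u, I u -> I (r * u)).

Definition prime_ideal (P : B -> Prop) : Prop :=
  is_ideal P /\ ~ P 1 /\ (forall u v, P (u * v) -> P u \/ P v).

Definition prime_chain (P : nat -> B -> Prop) (e : nat) : Prop :=
  (forall i, (i <= e)%N -> prime_ideal (P i)) /\
  (forall i, (i < e)%N -> (forall y, P i y -> P i.+1 y) /\ exists y, P i.+1 y /\ ~ P i y).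

Definition krull_dim (d : nat) : Prop :=
  (exists P, prime_chain P d) /\ (forall P e, prime_chain P e -> (e <= d)%N).

(* B / A is a finite module over the subring R of A (A, R subsets of B):
   there are finitely many b_j with B = sum_j R b_j + A *)
Definition quot_finite_over (R A : B -> Prop) : Prop :=
  exists bs : seq B, forall y, exists (c : 'I_(size bs) -> B) (a : B),
    (forall j, R (c j)) /\ A a /\ y = \sum_(j < size bs) c j * bs`_j + a.

End Defs.

(* Main.v *)
Require Import Defs.
From HB Require Import structures.
From mathcomp Require Import all_boot all_order all_algebra.
From mathcomp Require Import mpoly.
From Stdlib Require Import ClassicalEpsilon.
From mathcomp Require Import zify.
Import GRing.Theory.
Local Open Scope ring_scope.
Set Implicit Arguments. Unset Strict Implicit.
Set Warnings "-notation-overridden,-ambiguous-paths".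

Section Graded.
Variables (k : fieldType) (B : comAlgType k) (G : nat -> B -> Prop).
Hypothesis HG : standard_graded G.

Lemma GZD i a u v : G i u -> G i v -> G i (a *: u + v).
Proof. by case: HG => H _; case: (H i) => _; apply. Qed.
Lemma G0 i : G i 0. Proof. by case: HG => H _; case: (H i). Qed.
Lemma GD i u v : G i u -> G i v -> G i (u + v).
Proof. by move=> hu hv; have := @GZD i 1 u v hu hv; rewrite scale1r. Qed.
Lemma GZ i a u : G i u -> G i (a *: u).
Proof. by move=> hu; have := @GZD i a u 0 hu (G0 i); rewrite addr0. Qed.
Lemma GN i u : G i u -> G i (- u).
Proof. by move=> hu; have := @GZ i (-1) u hu; rewrite scaleN1r. Qed.
Lemma GB i u v : G i u -> G i v -> G i (u - v).
Proof. by move=> hu hv; apply: GD => //; apply: GN. Qed.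
Lemma GM i j u v : G i u -> G j v -> G (i + j)%N (u * v).
Proof. by case: HG => _ [H _]; apply: H. Qed.
Lemma G0iff y : G 0 y <-> exists a : k, y = a%:A.
Proof. by case: HG => _ [_ [_ [_ [H _]]]]; apply: H. Qed.
Lemma G01 : G 0 1.
Proof. by apply/G0iff; exists 1; rewrite scale1r. Qed.
Lemma G0A a : G 0 (a%:A).
Proof. by apply/G0iff; exists a. Qed.
Lemma Gsum i n (F : 'I_n -> B) : (forall j, G i (F j)) -> G i (\sum_j F j).
Proof. by move=> H; elim/big_ind: _ => //; [apply: G0 | move=> ? ?; apply: GD]. Qed.

Definition hdec (f : nat -> B) n y :=
  (forall j, G j (f j)) /\ (forall j, (n <= j)%N -> f j = 0) /\ y = \sum_(j < n) f j.

Lemma hdec_widen f n m y : hdec f n y -> (n <= m)%N -> hdec f m y.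
Proof.
move=> [H1 [H2 ->]] le; split=> //; split=> [j hj|]; first by apply H2; apply: leq_trans hj.
rewrite (big_ord_widen m f le) big_mkcond /=; apply: eq_bigr => i _.
by case: ifP => // /negbT; rewrite -leqNgt => /H2 ->.
Qed.

Lemma hdec_uniq f g n m y : hdec f n y -> hdec g m y -> forall j, f j = g j.
Proof.
move=> Hf Hg; have [Hf1 [Hf2 Hfy]] := hdec_widen Hf (leq_maxl n m).
have [Hg1 [Hg2 Hgy]] := hdec_widen Hg (leq_maxr n m).
move=> j; case: (ltnP j (maxn n m)) => hj; last by rewrite Hf2 ?Hg2.
case: HG => _ [_ [_ [Hu _]]].
have Hs : \sum_(i < maxn n m) (f i - g i) = 0 by rewrite sumrB -Hfy -Hgy subrr.
have := Hu _ (fun i : 'I_(maxn n m) => f i - g i) (fun i => GB (Hf1 i) (Hg1 i)) Hs (Ordinal hj).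
by move=> /= h; apply/eqP; rewrite -subr_eq0 h.
Qed.

Lemma hdec_ex y : exists f, exists n, hdec f n y.
Proof.
case: HG => _ [_ [Hex _]]; have [n [c [Hc ->]]] := Hex y.
exists (fun j => if insub j is Some i then c i else 0), n; split; [|split].
- move=> j; case: insubP => [i _ <-|_]; [exact: Hc | exact: G0].
- by move=> j hj; case: insubP => [i /= hi|//]; rewrite ltnNge hj in hi.
- by apply: eq_bigr => i _; rewrite valK.
Qed.

Definition comp (y : B) : nat -> B :=
  proj1_sig (constructive_indefinite_description _ (hdec_ex y)).

Lemma comp_hdec y : exists n, hdec (comp y) n y.
Proof. exact: (proj2_sig (constructive_indefinite_description _ (hdec_ex y))). Qed.

Lemma compE f n y : hdec f n y -> forall j, comp y j = f j.
Proof. by move=> H j; have [m Hm] := comp_hdec y; apply: hdec_uniq Hm H j. Qed.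

Lemma compG y j : G j (comp y j).
Proof. by have [m [H _]] := comp_hdec y. Qed.

Lemma comp_add y z j : comp (y + z) j = comp y j + comp z j.
Proof.
have [n1 H1] := comp_hdec y; have [n2 H2] := comp_hdec z.
have [A1 [B1 C1]] := hdec_widen H1 (leq_maxl n1 n2).
have [A2 [B2 C2]] := hdec_widen H2 (leq_maxr n1 n2).
apply: (@compE (fun j => comp y j + comp z j) (maxn n1 n2)).
split; [|split].
- by move=> i; apply: GD.
- by move=> i hi; rewrite B1 ?B2 ?addr0.
- by rewrite big_split /= -C1 -C2.
Qed.

Lemma comp0 j : comp 0 j = 0.
Proof. by apply: (@compE (fun _ => 0) 0); split; [exact: G0|split=>//]; rewrite big_ord0. Qed.

Lemma compZ a y j : comp (a *: y) j = a *: comp y j.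
Proof.
have [n [A1 [B1 C1]]] := comp_hdec y.
apply: (@compE (fun j => a *: comp y j) n); split; [|split].
- by move=> i; apply: GZ.
- by move=> i hi; rewrite B1 ?scaler0.
- by rewrite -scaler_sumr -C1.
Qed.

Lemma comp_sum n (F : 'I_n -> B) j :
  comp (\sum_(i < n) F i) j = \sum_(i < n) comp (F i) j.
Proof.
elim: n F => [|n IH] F; first by rewrite !big_ord0 comp0.
by rewrite !big_ord_recr /= comp_add IH.
Qed.

Lemma comp_hom i z j : G i z -> comp z j = if j == i then z else 0.
Proof.
move=> Hz; apply: (@compE (fun j => if j == i then z else 0) i.+1); split; [|split].
- by move=> l; case: eqP => [->|_] //; exact: G0.
- by move=> l hl; case: eqP => // el; rewrite el ltnn in hl.
- rewrite big_ord_recr /= eqxx big1 ?add0r // => l _.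
  by rewrite (ltn_eqF (ltn_ord l)).
Qed.

Lemma comp_mulh m h w j : G m h ->
  comp (h * w) j = if (m <= j)%N then h * comp w (j - m)%N else 0.
Proof.
move=> Hh; have [n [A1 [B1 C1]]] := comp_hdec w.
apply: (@compE (fun j => if (m <= j)%N then h * comp w (j - m)%N else 0) (m + n)).
split; [|split].
- move=> l; case: ifP => hl; last exact: G0.
  by have := GM Hh (A1 (l - m)%N); rewrite subnKC.
- move=> l hl; have hm : (m <= l)%N by apply: leq_trans hl; apply: leq_addr.
  by rewrite hm B1 ?mulr0 // leq_subRL.
- rewrite big_split_ord /= big1 ?add0r; last first.
    by move=> i _; rewrite leqNgt ltn_ord.
  rewrite {1}C1 mulr_sumr; apply: eq_bigr => i _.
  by rewrite leq_addr addKn.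
Qed.

Lemma comp_mul u v j : exists n,
  comp (u * v) j = \sum_(a < n) (if (a <= j)%N then comp u a * comp v (j - a)%N else 0).
Proof.
have [n [A1 [B1 C1]]] := comp_hdec u; exists n.
rewrite {1}C1 mulr_suml comp_sum; apply: eq_bigr => i _.
exact: comp_mulh.
Qed.


Local Notation rcl I := (forall r u, I u -> I (r * u)).

Lemma ideal_sum (I : B -> Prop) n (F : 'I_n -> B) : is_ideal I ->
  (forall i, I (F i)) -> I (\sum_(i < n) F i).
Proof. by move=> [H0 [HD _]] HF; elim/big_ind: _. Qed.

Lemma mul_one (I J : B -> Prop) a b : I a -> J b -> ideal_mul I J (a * b).
Proof.
move=> Ha Hb; exists 1%N, (fun _ => a), (fun _ => b); split=> //; split=> //.
by rewrite big_ord1.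
Qed.

Lemma mul_ideal (I J : B -> Prop) : rcl I -> is_ideal (ideal_mul I J).
Proof.
move=> HI; split; [|split].
- exists 0%N, (fun _ => 0), (fun _ => 0); split; [by case|split; [by case|]].
  by rewrite big_ord0.
- move=> u v [n1 [a1 [b1 [Ha1 [Hb1 ->]]]]] [n2 [a2 [b2 [Ha2 [Hb2 ->]]]]].
  exists (n1 + n2)%N, (fun i => match split i with inl i => a1 i | inr i => a2 i end),
    (fun i => match split i with inl i => b1 i | inr i => b2 i end).
  split; [|split].
  + by move=> i; case: (split i).
  + by move=> i; case: (split i).
  + rewrite big_split_ord /=; congr (_ + _); apply: eq_bigr => i _.
    * by rewrite (unsplitK (inl _ i)).
    * by rewrite (unsplitK (inr _ i)).
- move=> r u [n [a [b [Ha [Hb ->]]]]]; exists n, (fun i => r * a i), b.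
  split; [by move=> i; apply: HI|split=> //].
  by rewrite mulr_sumr; apply: eq_bigr => i _; rewrite mulrA.
Qed.

Lemma mul_mono (I J I' J' : B -> Prop) y : (forall z, I z -> I' z) -> (forall z, J z -> J' z) ->
  ideal_mul I J y -> ideal_mul I' J' y.
Proof.
move=> HI HJ [n [a [b [Ha [Hb ->]]]]]; exists n, a, b; split; [|split] => //.
- by move=> i; apply: HI.
- by move=> i; apply: HJ.
Qed.

Lemma pow_ideal (I : B -> Prop) n : rcl I -> is_ideal (ideal_pow I n).
Proof. by move=> HI; case: n => [|n] /=; [split | apply: mul_ideal]. Qed.

Lemma pow_rcl (I : B -> Prop) n : rcl I -> rcl (ideal_pow I n).
Proof. by move=> HI; have [_ [_ H]] := pow_ideal n HI. Qed.

Lemma pow_mul (I : B -> Prop) a b u v : rcl I ->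
  ideal_pow I a u -> ideal_pow I b v -> ideal_pow I (a + b)%N (u * v).
Proof.
move=> HI; elim: a u => [|a IH] u /=.
  by move=> _ hv; rewrite add0n; apply: (pow_rcl HI).
move=> [n [c [e [Hc [He ->]]]]] hv; rewrite mulr_suml /=.
apply: (ideal_sum (mul_ideal _ HI)) => i; rewrite -mulrA.
by apply: mul_one => //; apply: IH.
Qed.

Lemma pow_anti (I : B -> Prop) n y : rcl I -> ideal_pow I n.+1 y -> ideal_pow I n y.
Proof.
move=> HI [m [c [e [Hc [He ->]]]]]; apply: ideal_sum; first exact: (pow_ideal n HI).
by move=> i; apply: (pow_rcl HI); apply: He.
Qed.

Lemma pow_anti_le (I : B -> Prop) n m y : rcl I -> (n <= m)%N ->
  ideal_pow I m y -> ideal_pow I n y.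
Proof.
move=> HI /subnKC <-; elim: (m - n)%N y => [|l IH] y; first by rewrite addn0.
by rewrite addnS => /(pow_anti HI); apply: IH.
Qed.

Lemma gen_ideal (L : seq B) : is_ideal (ideal_gen L).
Proof.
split; [|split].
- by exists (fun _ => 0); rewrite big1 // => i _; rewrite mul0r.
- move=> u v [c1 ->] [c2 ->]; exists (fun i => c1 i + c2 i).
  by rewrite -big_split; apply: eq_bigr => i _; rewrite mulrDl.
- move=> r u [c ->]; exists (fun i => r * c i).
  by rewrite mulr_sumr; apply: eq_bigr => i _; rewrite mulrA.
Qed.

Lemma gen_rcl (L : seq B) : rcl (ideal_gen L).
Proof. by have [_ [_ H]] := gen_ideal L. Qed.

Lemma gen_mem (L : seq B) (i : 'I_(size L)) : ideal_gen L L`_i.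
Proof.
exists (fun j => if j == i then 1 else 0).
rewrite (bigD1 i) //= eqxx mul1r big1 ?addr0 // => j /negbTE ->.
by rewrite mul0r.
Qed.

Lemma hmaxE y : hmax G y <-> comp y 0 = 0.
Proof.
split.
- move=> [n [c [Hc ->]]]; rewrite comp_sum big1 // => i _.
  by rewrite (comp_hom _ (Hc i)).
- move=> H0; have [n Hn] := comp_hdec y.
  have [_ [_ Hy]] := hdec_widen Hn (leqnSn n).
  exists n, (fun i : 'I_n => comp y i.+1); split; first by move=> i; apply: compG.
  by rewrite {1}Hy big_ord_recl H0 add0r; apply: eq_bigr => i _; rewrite lift0.
Qed.

Lemma hmax_ideal : is_ideal (hmax G).
Proof.
split; [|split].
- by apply/hmaxE; rewrite comp0.
- by move=> u v /hmaxE hu /hmaxE hv; apply/hmaxE; rewrite comp_add hu hv addr0.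
- move=> r u /hmaxE hu; apply/hmaxE; have [n ->] := comp_mul r u 0.
  apply: big1 => i _; case: ifP => // hi.
  by move: hi; rewrite leqn0 => /eqP ->; rewrite subnn hu mulr0.
Qed.

Lemma hmax_rcl : rcl (hmax G).
Proof. by have [_ [_ H]] := hmax_ideal. Qed.

Lemma G1_hmax z : G 1 z -> hmax G z.
Proof. by move=> hz; apply/hmaxE; rewrite (comp_hom _ hz). Qed.


Section Alg.
Variable L : seq B.

Lemma alg_ind (P : B -> Prop) :
  (forall u v, P u -> P v -> P (u + v)) ->
  (forall u v, P u -> P v -> P (u * v)) ->
  (forall a : k, P (a%:A)) ->
  (forall i : 'I_(size L), P L`_i) ->
  forall y, alg_gen L y -> P y.
Proof.
move=> HD HM HA HL y [p Hp]; rewrite Hp /mmap.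
have P0 : P 0 by rewrite -(scale0r (1 : B)); apply: HA.
have P1 : P 1 by rewrite -(scale1r (1 : B)); apply: HA.
apply: (big_ind P) => // m _; apply: (HM); first exact: HA.
rewrite /mmap1; apply: (big_ind P) => //; move=> i _.
elim: (m i) => [|e IH]; first by rewrite expr0.
by rewrite exprS; apply: (HM).
Qed.

Let hL := fun i : 'I_(size L) => L`_i.

Lemma alg_add u v : alg_gen L u -> alg_gen L v -> alg_gen L (u + v).
Proof.
move=> [p ->] [q ->]; exists (p + q).
exact: (esym (rmorphD (mmap (GRing.in_alg B) hL) p q)).
Qed.

Lemma alg_mul u v : alg_gen L u -> alg_gen L v -> alg_gen L (u * v).
Proof.
move=> [p ->] [q ->]; exists (p * q).
exact: (esym (rmorphM (mmap (GRing.in_alg B) hL) p q)).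
Qed.

Lemma alg_A (a : k) : alg_gen L (a%:A).
Proof. by exists (a%:MP); rewrite (mmapC hL (GRing.in_alg B)). Qed.

Lemma alg_L (i : 'I_(size L)) : alg_gen L L`_i.
Proof. by exists ('X_i); rewrite (mmapX hL (GRing.in_alg B)) mmap1U. Qed.

Lemma alg_0 : alg_gen L 0.
Proof. by rewrite -(scale0r (1 : B)); apply: alg_A. Qed.
Lemma alg_1 : alg_gen L 1.
Proof. by rewrite -(scale1r (1 : B)); apply: alg_A. Qed.

End Alg.


Inductive span (P : B -> Prop) : B -> Prop :=
| sp0 : span P 0
| spP x : P x -> span P x
| spD x y : span P x -> span P y -> span P (x + y)
| spZ (a : k) x : span P x -> span P (a *: x).

Lemma span_sum (P : B -> Prop) n (F : 'I_n -> B) :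
  (forall i, span P (F i)) -> span P (\sum_(i < n) F i).
Proof. move=> H; apply: (big_ind (span P)) => //; [exact: sp0 | exact: spD]. Qed.

Section Words.
Variable S : seq B.
Hypothesis HS1 : forall z, z \in S -> G 1 z.
Hypothesis HSgen : forall y, alg_gen S y.

Fixpoint wlist j : seq B :=
  match j with 0 => [:: 1] | j'.+1 => [seq s * w | s <- S, w <- wlist j'] end.

Definition W j := span (fun w => w \in wlist j).

Lemma wlist_G j w : w \in wlist j -> G j w.
Proof.
elim: j w => [|j IH] w /=; first by rewrite mem_seq1 => /eqP ->; exact: G01.
case/allpairsP => [[s w'] /= [hs hw ->]].
exact: (GM (HS1 hs) (IH _ hw)).
Qed.

Lemma W_G j y : W j y -> G j y.
Proof.
elim=> [|x /wlist_G //|x z _ hx _ hz|a x _ hx]; [exact: G0|exact: GD|exact: GZ].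
Qed.

Lemma wlist_mul a b u v : u \in wlist a -> v \in wlist b -> u * v \in wlist (a + b).
Proof.
elim: a u => [|a IH] u /=; first by rewrite mem_seq1 => /eqP -> hv; rewrite mul1r.
case/allpairsP => [[s w'] /= [hs hw ->]] hv; rewrite -mulrA.
by apply: allpairs_f => //; apply: IH.
Qed.

Lemma W_mul a b u v : W a u -> W b v -> W (a + b) (u * v).
Proof.
move=> Hu Hv; elim: Hu => [|x hx|x z _ hx _ hz|c x _ hx].
- by rewrite mul0r; exact: sp0.
- elim: Hv => [|y hy|y z _ hy _ hz|c y _ hy].
  + by rewrite mulr0; exact: sp0.
  + by apply: spP; apply: wlist_mul.
  + by rewrite mulrDr; apply: spD.
  + by rewrite -scalerAr; apply: spZ.
- by rewrite mulrDl; apply: spD.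
- by rewrite -scalerAl; apply: spZ.
Qed.

Lemma wlist_pow j n x : (n <= j)%N -> x \in wlist j -> ideal_pow (hmax G) n x.
Proof.
elim: n j x => [|n IH] [|j] //= x hn.
case/allpairsP => [[s w'] /= [hs hw ->]].
apply: mul_one; first by apply: G1_hmax; apply: HS1.
exact: (IH j _ hn).
Qed.

Lemma W_pow j n y : (n <= j)%N -> W j y -> ideal_pow (hmax G) n y.
Proof.
move=> hn Hy; have [I0 [ID IM]] := pow_ideal n hmax_rcl.
elim: Hy => [|x hx|x z _ hx _ hz|c x _ hx] //.
- exact: (wlist_pow hn).
- by apply: ID.
- by rewrite -mulr_algl; apply: IM.
Qed.

Lemma comp_W y j : W j (comp y j).
Proof.
move: y (HSgen y) j; apply: alg_ind.
- by move=> u v hu hv j; rewrite comp_add; apply: spD; [apply: hu|apply: hv].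
- move=> u v hu hv j; have [n ->] := comp_mul u v j.
  apply: span_sum => i; case: ifP => hi; last exact: sp0.
  by have := W_mul (hu i) (hv (j - i)%N); rewrite subnKC.
- move=> a j; rewrite (comp_hom _ (G0A a)); case: eqP => [->|_]; last exact: sp0.
  by rewrite -(mulr1 (a%:A)) mulr_algl; apply: spZ; apply: spP; rewrite mem_seq1.
- move=> i j; have hi : S`_i \in S by apply: mem_nth.
  rewrite (comp_hom _ (HS1 hi)); case: eqP => [->|_]; last exact: sp0.
  by apply: spP; rewrite -[S`_i]mulr1; apply: allpairs_f => //; rewrite mem_seq1.
Qed.

Lemma G_pow n m z : (m <= n)%N -> G n z -> ideal_pow (hmax G) m z.
Proof.
move=> hm hz; apply: (W_pow hm); have := comp_W z n.
by rewrite (comp_hom _ hz) eqxx.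
Qed.

End Words.


Lemma mem_alg (L : seq B) z : z \in L -> alg_gen L z.
Proof.
move=> hz; have hi : (index z L < size L)%N by rewrite index_mem.
by have := alg_L (Ordinal hi); rewrite /= nth_index.
Qed.

Lemma sub_alg (L M : seq B) : (forall z, z \in L -> alg_gen M z) -> forall y, alg_gen L y -> alg_gen M y.
Proof.
move=> H; apply: alg_ind; [exact: alg_add|exact: alg_mul|exact: alg_A|].
by move=> i; apply: H; apply: mem_nth.
Qed.

Lemma gen_mulE (L : seq B) a b : ideal_gen L a ->
  exists c : 'I_(size L) -> B, a * b = \sum_(l < size L) L`_l * c l.
Proof.
move=> [c ->]; exists (fun l => c l * b); rewrite mulr_suml; apply: eq_bigr => l _.
by rewrite mulrAC mulrC.
Qed.

Lemma comp_bound (s : seq B) : exists D, forall z, z \in s -> forall i, (D <= i)%N -> comp z i = 0.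
Proof.
elim: s => [|z s [D HD]]; first by exists 0%N.
have [n [_ [Hn _]]] := comp_hdec z; exists (maxn n D) => w; rewrite inE => /orP [/eqP ->|hw] i hi.
- by apply: Hn; apply: leq_trans hi; apply: leq_maxl.
- by apply: HD => //; apply: leq_trans hi; apply: leq_maxr.
Qed.

Section Main.
Variables (X1 X2 : seq B).
Hypothesis HX1 : forall z, z \in X1 -> G 1 z.
Hypothesis HX2 : forall z, z \in X2 -> G 1 z.
Variable S : seq B.
Hypothesis HS1 : forall z, z \in S -> G 1 z.
Hypothesis HSgen : forall y, alg_gen S y.

Definition HI (al : nat) (u : B) : Prop :=
  match al with
  | 0 => u = 0
  | a.+1 => exists r : 'I_(size X1) -> B, (forall l, G a (r l)) /\ u = \sum_l r l * X1`_l
  end.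

Lemma HI0 al : HI al 0.
Proof.
case: al => [|a] //=; exists (fun _ => 0); split; first by move=> l; exact: G0.
by rewrite big1 // => l _; rewrite mul0r.
Qed.

Lemma HI_add al u v : HI al u -> HI al v -> HI al (u + v).
Proof.
case: al => [|a] /=; first by move=> -> ->; rewrite addr0.
move=> [r1 [H1 ->]] [r2 [H2 ->]]; exists (fun l => r1 l + r2 l); split.
  by move=> l; apply: GD.
by rewrite -big_split; apply: eq_bigr => l _; rewrite mulrDl.
Qed.

Lemma HI_sum al n (F : 'I_n -> B) : (forall i, HI al (F i)) -> HI al (\sum_(i < n) F i).
Proof. by move=> H; apply: (big_ind (HI al)) => //; [exact: HI0 | exact: HI_add]. Qed.

Lemma HI_mul b j u w : HI b u -> G j w -> HI (b + j) (w * u).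
Proof.
case: b => [|b] /=; first by move=> -> _; rewrite mulr0 add0n; apply: HI0.
move=> [r [Hr ->]] Hw /=; exists (fun l => w * r l); split.
  by move=> l; rewrite addnC; apply: GM.
by rewrite mulr_sumr; apply: eq_bigr => l _; rewrite mulrA.
Qed.

Lemma HI1_mem z : z \in X1 -> HI 1 z.
Proof.
move=> hz; have hi : (index z X1 < size X1)%N by rewrite index_mem.
exists (fun l => if l == Ordinal hi then 1 else 0); split.
  by move=> l; case: eqP => _; [exact: G01 | exact: G0].
rewrite (bigD1 (Ordinal hi)) //= eqxx mul1r nth_index // big1 ?addr0 // => l /negbTE ->.
by rewrite mul0r.
Qed.

Lemma HI_X n i u : (0 < n)%N -> (n <= i)%N -> HI i u ->
  ideal_mul (ideal_gen X1) (ideal_pow (hmax G) n.-1) u.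
Proof.
case: i => [|i] hn hi; first by rewrite leqn0 in hi; move/eqP: hi hn => ->.
move=> [r [Hr ->]]; exists (size X1), (fun l => X1`_l), r; split; first exact: gen_mem.
split; last by apply: eq_bigr => l _; rewrite mulrC.
move=> l; apply: (G_pow HS1 HSgen _ (Hr l)).
by rewrite -ltnS prednK.
Qed.

Lemma R_inv c : alg_gen X1 c -> forall al, (0 < al)%N -> HI al (comp c al).
Proof.
move: c; apply: alg_ind.
- by move=> u v hu hv al hal; rewrite comp_add; apply: HI_add; [apply: hu|apply: hv].
- move=> u v hu hv al hal; have [n ->] := comp_mul u v al.
  apply: HI_sum => i; case: ifP => hi; last exact: HI0.
  case: (posnP i) => [hi0|hip].
    rewrite hi0 subn0; have := HI_mul (hv al hal) (compG u 0); by rewrite addn0.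
  have := HI_mul (hu i hip) (compG v (al - i)%N); rewrite subnKC // mulrC; exact.
- move=> a al hal; rewrite (comp_hom _ (G0A a)); case: eqP => [e|_]; last exact: HI0.
  by rewrite e in hal.
- move=> i al hal; have hz : X1`_i \in X1 by apply: mem_nth.
  rewrite (comp_hom _ (HX1 hz)); case: eqP => [->|_]; last exact: HI0.
  exact: HI1_mem.
Qed.


Lemma gen_memz (L : seq B) z : z \in L -> ideal_gen L z.
Proof.
move=> hz; have hi : (index z L < size L)%N by rewrite index_mem.
by have := gen_mem (Ordinal hi); rewrite /= nth_index.
Qed.

Definition Y al z := exists u v, HI al u /\ ideal_pow (ideal_gen X2) al v /\ G al v /\ z = u + v.

Lemma Y0 al : Y al 0.
Proof.
exists 0, 0; split; first exact: HI0.
split; first by have [H _] := pow_ideal al (@gen_rcl X2).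
by split; [exact: G0 | rewrite addr0].
Qed.

Lemma Y_add al z1 z2 : Y al z1 -> Y al z2 -> Y al (z1 + z2).
Proof.
move=> [u1 [v1 [H1 [P1 [G1 ->]]]]] [u2 [v2 [H2 [P2 [G2 ->]]]]].
exists (u1 + u2), (v1 + v2); split; first exact: HI_add.
split; first by have [_ [H _]] := pow_ideal al (@gen_rcl X2); apply: H.
by split; [exact: GD | rewrite addrACA].
Qed.

Lemma Y_sum al n (F : 'I_n -> B) : (forall i, Y al (F i)) -> Y al (\sum_(i < n) F i).
Proof. by move=> H; apply: (big_ind (Y al)) => //; [exact: Y0 | exact: Y_add]. Qed.

Lemma Y_mul b c z1 z2 : Y b z1 -> Y c z2 -> G c z2 -> Y (b + c) (z1 * z2).
Proof.
move=> [u1 [v1 [H1 [P1 [G1 E1]]]]] [u2 [v2 [H2 [P2 [G2 E2]]]]] Gz2.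
exists (z2 * u1 + v1 * u2), (v1 * v2); split.
  apply: HI_add; first exact: HI_mul.
  by rewrite addnC; apply: HI_mul.
split; first exact: (pow_mul (@gen_rcl X2)).
split; first exact: GM.
rewrite E1 mulrDl.
have -> : v1 * z2 = v1 * u2 + v1 * v2 by rewrite E2 mulrDr.
by rewrite addrA [u1 * _]mulrC.
Qed.

Lemma A_inv a : alg_gen (X1 ++ X2) a -> forall al, Y al (comp a al).
Proof.
move: a; apply: alg_ind.
- by move=> u v hu hv al; rewrite comp_add; apply: Y_add; [apply: hu|apply: hv].
- move=> u v hu hv al; have [n ->] := comp_mul u v al.
  apply: Y_sum => i; case: ifP => hi; last exact: Y0.
  by have := Y_mul (hu i) (hv (al - i)%N) (compG v _); rewrite subnKC.
- move=> a al; rewrite (comp_hom _ (G0A a)); case: eqP => [->|_]; last exact: Y0.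
  exists 0, (a%:A); split=> //; split=> //; split; [exact: G0A | by rewrite add0r].
- move=> i al; have hz : (X1 ++ X2)`_i \in X1 ++ X2 by apply: mem_nth.
  have hG : G 1 (X1 ++ X2)`_i.
    by move: hz; rewrite mem_cat => /orP [/HX1|/HX2].
  rewrite (comp_hom _ hG); case: eqP => [->|_]; last exact: Y0.
  move: hz; rewrite mem_cat => /orP [h1|h2].
  + exists (X1 ++ X2)`_i, 0; split; first exact: HI1_mem.
    split; first by have [H _] := pow_ideal 1 (@gen_rcl X2).
    by split; [exact: G0 | rewrite addr0].
  + exists 0, (X1 ++ X2)`_i; split; first exact: HI0.
    split; first by rewrite -[X in ideal_pow _ _ X]mulr1; apply: mul_one => //; apply: gen_memz.
    by split; [exact: hG | rewrite add0r].
Qed.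

Definition Xn n := ideal_add (ideal_mul (ideal_gen X1) (ideal_pow (hmax G) n.-1))
  (ideal_pow (ideal_gen X2) n).

Lemma Xn_0 n : Xn n 0.
Proof.
exists 0, 0; split; first by have [H _] := mul_ideal (ideal_pow (hmax G) n.-1) (@gen_rcl X1).
split; first by have [H _] := pow_ideal n (@gen_rcl X2).
by rewrite addr0.
Qed.

Lemma Xn_add n u v : Xn n u -> Xn n v -> Xn n (u + v).
Proof.
move=> [a1 [b1 [A1 [B1 ->]]]] [a2 [b2 [A2 [B2 ->]]]].
exists (a1 + a2), (b1 + b2); split.
  by have [_ [H _]] := mul_ideal (ideal_pow (hmax G) n.-1) (@gen_rcl X1); apply: H.
split; first by have [_ [H _]] := pow_ideal n (@gen_rcl X2); apply: H.
by rewrite addrACA.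
Qed.

Lemma Xn_sum n m (F : 'I_m -> B) : (forall i, Xn n (F i)) -> Xn n (\sum_(i < m) F i).
Proof. by move=> H; apply: (big_ind (Xn n)) => //; [exact: Xn_0 | exact: Xn_add]. Qed.

Lemma HI_Xn n i u : (0 < n)%N -> (n <= i)%N -> HI i u -> Xn n u.
Proof.
move=> h1 h2 h3; exists u, 0; split; first exact: (HI_X h1 h2 h3).
split; first by have [H _] := pow_ideal n (@gen_rcl X2).
by rewrite addr0.
Qed.

Lemma pow_comp0 n y : ideal_pow (hmax G) n y -> forall j, (j < n)%N -> comp y j = 0.
Proof.
elim: n y => [|n IH] y //= [m [a [b [Ha [Hb ->]]]]] j hj.
rewrite comp_sum big1 // => i _; have [l ->] := comp_mul (a i) (b i) j.
apply: big1 => be _; case: ifP => // hbe.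
case: (posnP be) => [->|hp].
  by move: (Ha i) => /hmaxE ->; rewrite mul0r.
by rewrite (IH _ (Hb i)) ?mulr0 //; lia.
Qed.

Lemma gen_hmax (L : seq B) y : (forall z, z \in L -> G 1 z) -> ideal_gen L y -> hmax G y.
Proof.
move=> HL [c ->]; apply: (ideal_sum hmax_ideal) => l.
by apply: hmax_rcl; apply: G1_hmax; apply: HL; apply: mem_nth.
Qed.

Lemma pow_mono (I J : B -> Prop) n y : (forall z, I z -> J z) ->
  ideal_pow I n y -> ideal_pow J n y.
Proof.
move=> HIJ; elim: n y => [|n IH] y //= H.
by apply: (mul_mono HIJ IH).
Qed.

Section Fin.
Variable bs : seq B.
Hypothesis Hbs : forall y, exists (c : 'I_(size bs) -> B) a,
  (forall j, alg_gen X1 (c j)) /\ alg_gen (X1 ++ X2) a /\ y = \sum_(j < size bs) c j * bs`_j + a.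
Variable D : nat.
Hypothesis HD : forall z, z \in bs -> forall i, (D <= i)%N -> comp z i = 0.

Lemma key n i z : (D < n)%N -> (n <= i)%N -> G i z -> Xn n z.
Proof.
move=> hDn hni hz; have hn0 : (0 < n)%N by lia.
have [c [a [Hc [Ha Hz]]]] := Hbs z.
have -> : z = comp z i by rewrite (comp_hom _ hz) eqxx.
rewrite Hz comp_add comp_sum; apply: Xn_add.
- apply: Xn_sum => j; have [m ->] := comp_mul (c j) (bs`_j) i.
  apply: Xn_sum => be; case: ifP => hbe; last exact: Xn_0.
  case: (posnP be) => [->|hp].
    have hbj : bs`_j \in bs by apply: mem_nth.
    rewrite subn0 (HD hbj (_ : (D <= i)%N)); last by lia.
    by rewrite mulr0; exact: Xn_0.
  apply: (@HI_Xn n i) => //.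
  by have := HI_mul (R_inv (Hc j) hp) (compG (bs`_j) (i - be)%N); rewrite subnKC // mulrC.
- have [u [v [Hu [Hv [_ ->]]]]] := A_inv Ha i.
  exists u, v; split; first exact: (HI_X hn0 hni Hu).
  by split=> //; apply: (pow_anti_le (@gen_rcl X2) hni Hv).
Qed.

Lemma fin_cond n y : (D < n)%N ->
  ideal_pow (hmax G) n y <-> Xn n y.
Proof.
move=> hDn; have hn0 : (0 < n)%N by lia.
split.
- move=> Hy; have [M [_ [_ ->]]] := comp_hdec y.
  apply: Xn_sum => j; case: (ltnP j n) => hj.
    by rewrite (pow_comp0 Hy hj); exact: Xn_0.
  exact: (key hDn hj (compG y j)).
- move=> [u [v [Hu [Hv ->]]]]; have [_ [H _]] := pow_ideal n hmax_rcl; apply: H.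
  + move: Hu; case: n hDn hn0 {Hv} => [|n] // _ _ /=.
    by apply: mul_mono => // z; apply: gen_hmax.
  + by apply: (pow_mono _ Hv) => z; apply: gen_hmax.
Qed.

End Fin.

Lemma alg_sum (L : seq B) n (F : 'I_n -> B) : (forall i, alg_gen L (F i)) ->
  alg_gen L (\sum_(i < n) F i).
Proof. by move=> H; apply: (big_ind (alg_gen L)) => //; [exact: alg_0 | exact: alg_add]. Qed.

Lemma gen2_comp n v : ideal_pow (ideal_gen X2) n v -> alg_gen (X1 ++ X2) (comp v n).
Proof.
elim: n v => [|n IH] v /=.
  by move=> _; have /G0iff [a ->] := compG v 0; apply: alg_A.
move=> [m [a [b [Ha [Hb ->]]]]]; rewrite comp_sum; apply: alg_sum => i.
case: (Ha i) => c0 ->; rewrite mulr_suml comp_sum; apply: alg_sum => l.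
have hz : X2`_l \in X2 by apply: mem_nth.
rewrite mulrAC mulrC (comp_mulh _ _ (HX2 hz)) subn1 /=.
apply: alg_mul; first by apply: mem_alg; rewrite mem_cat hz orbT.
apply: IH; exact: (pow_rcl (@gen_rcl X2)).
Qed.

Section Cond.
Variable N : nat.
Hypothesis HC : forall n, (N < n)%N -> forall y, ideal_pow (hmax G) n y -> Xn n y.

Definition bs := flatten [seq wlist S j | j <- iota 0 N.+1].

Definition T y := exists (c : 'I_(size bs) -> B) a,
  (forall j, alg_gen X1 (c j)) /\ alg_gen (X1 ++ X2) a /\ y = \sum_(j < size bs) c j * bs`_j + a.

Lemma T_add u v : T u -> T v -> T (u + v).
Proof.
move=> [c1 [a1 [C1 [A1 ->]]]] [c2 [a2 [C2 [A2 ->]]]].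
exists (fun j => c1 j + c2 j), (a1 + a2); split; first by move=> j; apply: alg_add.
split; first exact: alg_add.
rewrite addrACA -big_split /=; congr (_ + _); apply: eq_bigr => j _.
by rewrite mulrDl.
Qed.

Lemma T_mul r y : alg_gen X1 r -> alg_gen (X1 ++ X2) r -> T y -> T (r * y).
Proof.
move=> hr1 hr2 [c [a [C [A ->]]]].
exists (fun j => r * c j), (r * a); split; first by move=> j; apply: alg_mul.
split; first exact: alg_mul.
rewrite mulrDr mulr_sumr; congr (_ + _); apply: eq_bigr => j _.
by rewrite mulrA.
Qed.

Lemma T_A a : alg_gen (X1 ++ X2) a -> T a.
Proof.
move=> ha; exists (fun _ => 0), a; split; first by move=> j; apply: alg_0.
by split=> //; rewrite big1 ?add0r // => j _; rewrite mul0r.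
Qed.

Lemma T_sum n (F : 'I_n -> B) : (forall i, T (F i)) -> T (\sum_(i < n) F i).
Proof.
move=> H; apply: (big_ind T) => //; last exact: T_add.
exact: (T_A (@alg_0 _)).
Qed.

Lemma T_bs z : z \in bs -> T z.
Proof.
move=> hz; have hi : (index z bs < size bs)%N by rewrite index_mem.
exists (fun j => if j == Ordinal hi then 1 else 0), 0; split.
  by move=> j; case: eqP => _; [exact: alg_1 | exact: alg_0].
split; first exact: alg_0.
rewrite addr0 (bigD1 (Ordinal hi)) //= eqxx mul1r nth_index // big1 ?addr0 // => l /negbTE ->.
by rewrite mul0r.
Qed.

Lemma T_W n y : (n <= N)%N -> W S n y -> T y.
Proof.
move=> hn; elim => [|w hw|u v _ hu _ hv|a u _ hu].
- exact: (T_A (@alg_0 _)).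
- apply: T_bs; apply/flattenP; exists (wlist S n) => //.
  by apply/mapP; exists n => //; rewrite mem_iota add0n ltnS hn.
- exact: T_add.
- by rewrite -mulr_algl; apply: T_mul => //; apply: alg_A.
Qed.

Lemma T_G n y : G n y -> T y.
Proof.
elim/ltn_ind: n y => n IH y hy.
have Ey : y = comp y n by rewrite (comp_hom _ hy) eqxx.
case: (leqP n N) => hn.
  by rewrite Ey; apply: (T_W hn); apply: comp_W.
have [u [v [Hu [Hv Hy]]]] := HC hn (G_pow HS1 HSgen (leqnn n) hy).
rewrite Ey Hy comp_add; apply: T_add; last exact: (T_A (gen2_comp Hv)).
move: Hu => [m [a [b [Ha [Hb ->]]]]]; rewrite comp_sum; apply: T_sum => i.
case: (Ha i) => c0 ->; rewrite mulr_suml comp_sum; apply: T_sum => l.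
have hz : X1`_l \in X1 by apply: mem_nth.
rewrite mulrAC mulrC (comp_mulh _ _ (HX1 hz)).
have -> : (1 <= n)%N by lia.
apply: T_mul; first exact: mem_alg.
  by apply: mem_alg; rewrite mem_cat hz.
apply: (IH (n - 1)%N); first by lia.
exact: compG.
Qed.

Lemma T_all y : T y.
Proof.
have [M [_ [_ ->]]] := comp_hdec y.
by apply: T_sum => j; apply: (@T_G j); apply: compG.
Qed.

End Cond.

End Main.

End Graded.

Theorem lemma2p4 (k : fieldType) (B : comAlgType k) (G : nat -> B -> Prop)
    (d s : nat) (x : seq B) :
  standard_graded G -> krull_dim B d -> (0 < d)%N ->
  size x = (d + s)%N -> (forall z, z \in x -> G 1%N z) ->
  (exists N, forall n, (N < n)%N -> forall y,
      ideal_pow (hmax G) n y <->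
      ideal_add
        (ideal_mul (ideal_gen (take d.-1 x)) (ideal_pow (hmax G) n.-1))
        (ideal_pow (ideal_gen (drop d.-1 x)) n) y)
  <-> quot_finite_over (alg_gen (take d.-1 x)) (alg_gen x).
Proof.
move=> HG _ _ _ Hx.
case: (HG) => _ [_ [_ [_ [_ [S [HS1 HSgen]]]]]].
have HX1 : forall z, z \in take d.-1 x -> G 1 z by move=> z hz; apply: Hx; apply: mem_take hz.
have HX2 : forall z, z \in drop d.-1 x -> G 1 z by move=> z hz; apply: Hx; apply: mem_drop hz.
split.
- move=> [N HN].
  have HC : forall n, (N < n)%N -> forall y, ideal_pow (hmax G) n y ->
      Xn G (take d.-1 x) (drop d.-1 x) n y.
    by move=> n hn y hy; apply/(HN n hn).
  exists (bs S N) => y.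
  have [c [a [Hc [Ha Hy]]]] := T_all HG HX1 HX2 HS1 HSgen HC y.
  by exists c, a; split=> //; split=> //; move: Ha; rewrite cat_take_drop.
- move=> [bs0 Hbs].
  have Hbs' : forall y, exists (c : 'I_(size bs0) -> B) a,
      (forall j, alg_gen (take d.-1 x) (c j)) /\ alg_gen (take d.-1 x ++ drop d.-1 x) a /\
      y = \sum_(j < size bs0) c j * bs0`_j + a.
    by move=> y; rewrite cat_take_drop; apply: Hbs.
  have [D HD] := comp_bound HG bs0.
  exists D => n hn y.
  exact: (fin_cond HX1 HX2 HS1 HSgen Hbs' HD y hn).
Qed.
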